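(* Let $(V,g)$ be a real vector space of dimension $n\ge3$ with a non-degenerate scalar product $g$ (of arbitrary signature). Let $R\in\mathfrak{r}(V)$ with $R^*\in\mathfrak{r}(V)$. Then: (1) $\pi_8(R)=0=\pi_8(R^* )$; (2) $Ric(R)$ is symmetric if and only if $Ric^*(R)$ is symmetric.
   Context: $\mathfrak{r}(V)$ is the space of $(0,4)$-tensors $R$ with $R(x,y,z,w)=-R(y,x,z,w)$ and $R(x,y,z,w)+R(y,z,x,w)+R(z,x,y,w)=0$. The conjugate of a $(0,4)$-tensor is $R^*(x,y,z,w):=-R(x,y,w,z)$. With $\{e_i\}$ a basis, $g_{ij}=g(e_i,e_j)$ and $(g^{ij})$ the inverse matrix (summation convention), $Ric(R)(x,y):=g^{ij}R(e_i,x,y,e_j)$ and $Ric^*(R):=Ric(R^* )$. For bilinear forms $h,k$: $\Lambda h(x,y)=\tfrac12[h(x,y)-h(y,x)]$; $(h\cdot k)(x,y,z,w)=h(x,y)k(z,w)$; $(h\wedge_r k)(x,y,z,w)=h(x,z)k(y,w)-h(y,z)k(x,w)-r[h(x,w)k(y,z)-h(y,w)k(x,z)]$. Define $4\psi(R)(x,y,z,w)=R(x,y,z,w)+R(y,x,w,z)+R(z,w,x,y)+R(w,z,y,x)$ and $8\mu(R)(x,y,z,w)=3R(x,y,z,w)+3R(x,y,w,z)+R(x,w,z,y)+R(x,z,w,y)+R(w,y,z,x)+R(z,y,w,x)$. For $R\in\mathfrak{r}(V)$ put $\pi_8(R):=R-\psi(R)-\mu(R)+\tfrac{1}{2(n-2)}\Lambda(Ric(R)+Ric^*(R))\cdot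 g+\tfrac{1}{4(n-2)}\Lambda(Ric(R)+Ric^*(R))\wedge_3 g$. *)

(* Defs.v *)
(* V = 'rV[R]_n (a real vector space of dimension n),
   g given by its Gram matrix G in the standard basis e_i := delta_mx 0 i. *)
From HB Require Import structures.
From mathcomp Require Import all_boot all_order all_algebra.
From mathcomp Require Import reals.
Set Implicit Arguments. Unset Strict Implicit. Unset Printing Implicit Defensive.
Import Order.TTheory GRing.Theory Num.Theory.
Local Open Scope ring_scope.

Section Defs.
Variables (R : realType) (n : nat).
Local Notation V := 'rV[R]_n.

Definition tensor4 := V -> V -> V -> V -> R.
Definition bilin := V -> V -> R.

Definition ebasis (i : 'I_n) : V := delta_mx 0 i.

Definition gform (G : 'M[R]_n) : bilin := fun x y => (x *m G *m y^T) 0 0.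

Definition multilinear4 (T : tensor4) : Prop :=
  (forall a x x' y z w, T (a *: x + x') y z w = a * T x y z w + T x' y z w) /\
  (forall a x y y' z w, T x (a *: y + y') z w = a * T x y z w + T x y' z w) /\
  (forall a x y z z' w, T x y (a *: z + z') w = a * T x y z w + T x y z' w) /\
  (forall a x y z w w', T x y z (a *: w + w') = a * T x y z w + T x y z w').

Definition in_r (T : tensor4) : Prop :=
  multilinear4 T /\
  (forall x y z w, T x y z w = - T y x z w) /\
  (forall x y z w, T x y z w + T y z x w + T z x y w = 0).

Definition conjT (T : tensor4) : tensor4 := fun x y z w => - T x y w z.

Definition Ric (G : 'M[R]_n) (T : tensor4) : bilin :=
  fun x y => \sum_(i < n) \sum_(j < n) invmx G i j * T (ebasis i) x y (ebasis j).

Definition RicS (G : 'M[R]_n) (T : tensor4) : bilin := Ric G (conjT T).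

Definition symmetric_bilin (h : bilin) : Prop := forall x y, h x y = h y x.

Definition Lam (h : bilin) : bilin := fun x y => (h x y - h y x) / 2.

Definition dotb (h k : bilin) : tensor4 := fun x y z w => h x y * k z w.

Definition wedge (r : R) (h k : bilin) : tensor4 := fun x y z w =>
  h x z * k y w - h y z * k x w - r * (h x w * k y z - h y w * k x z).

Definition psiT (T : tensor4) : tensor4 := fun x y z w =>
  (T x y z w + T y x w z + T z w x y + T w z y x) / 4.

Definition muT (T : tensor4) : tensor4 := fun x y z w =>
  (3 * T x y z w + 3 * T x y w z + T x w z y + T x z w y
   + T w y z x + T z y w x) / 8.

Definition pi8 (G : 'M[R]_n) (T : tensor4) : tensor4 := fun x y z w =>
  let A := Lam (fun u v => Ric G T u v + RicS G T u v) in
  T x y z w - psiT T x y z w - muT T x y z w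
  + (2 * (n%:R - 2))^-1 * dotb A (gform G) x y z w
  + (4 * (n%:R - 2))^-1 * wedge 3 A (gform G) x y z w.

End Defs.

(* Main.v *)
Require Import Defs.
From HB Require Import structures.
From mathcomp Require Import all_boot all_order all_algebra.
From mathcomp Require Import reals.
From mathcomp Require Import lra.
From Stdlib Require Import FunctionalExtensionality.
Import Order.TTheory GRing.Theory Num.Theory.
Local Open Scope ring_scope.

Section Aux.
Variables (R : realType) (n : nat).

Lemma core_id (T : tensor4 R n) :
  (forall x y z w, T x y z w = - T y x z w) ->
  (forall x y z w, T x y z w + T y z x w + T z x y w = 0) ->
  (forall x y z w, T x y w z + T y z w x + T z x w y = 0) ->
  forall x y z w,
   T x y z w - psiT T x y z w - muT T x y z w = 0.
Proof.
move=> H1 H2 H4 x y z w.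
rewrite /psiT /muT.
  have := H1 x y z w; have := H2 x y z w; have := H4 x y z w.
  have := H1 x y w z; have := H2 x y w z; have := H4 x y w z.
  have := H1 x z y w; have := H2 x z y w; have := H4 x z y w.
  have := H1 x z w y; have := H2 x z w y; have := H4 x z w y.
  have := H1 x w y z; have := H2 x w y z; have := H4 x w y z.
  have := H1 x w z y; have := H2 x w z y; have := H4 x w z y.
  have := H1 y x z w; have := H2 y x z w; have := H4 y x z w.
  have := H1 y x w z; have := H2 y x w z; have := H4 y x w z.
  have := H1 y z x w; have := H2 y z x w; have := H4 y z x w.
  have := H1 y z w x; have := H2 y z w x; have := H4 y z w x.
  have := H1 y w x z; have := H2 y w x z; have := H4 y w x z.
  have := H1 y w z x; have := H2 y w z x; have := H4 y w z x.
  have := H1 z x y w; have := H2 z x y w; have := H4 z x y w.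
  have := H1 z x w y; have := H2 z x w y; have := H4 z x w y.
  have := H1 z y x w; have := H2 z y x w; have := H4 z y x w.
  have := H1 z y w x; have := H2 z y w x; have := H4 z y w x.
  have := H1 z w x y; have := H2 z w x y; have := H4 z w x y.
  have := H1 z w y x; have := H2 z w y x; have := H4 z w y x.
  have := H1 w x y z; have := H2 w x y z; have := H4 w x y z.
  have := H1 w x z y; have := H2 w x z y; have := H4 w x z y.
  have := H1 w y x z; have := H2 w y x z; have := H4 w y x z.
  have := H1 w y z x; have := H2 w y z x; have := H4 w y z x.
  have := H1 w z x y; have := H2 w z x y; have := H4 w z x y.
  have := H1 w z y x; have := H2 w z y x; have := H4 w z y x.
  move=> *; lra.
Qed.

Lemma core_id2 (T : tensor4 R n) :
  (forall x y z w, T x y z w = - T y x z w) ->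
  (forall x y z w, T x y z w + T y z x w + T z x y w = 0) ->
  (forall x y z w, T x y w z + T y z w x + T z x w y = 0) ->
  forall x y z w,
   T x y z w - T x y w z = T w z y x - T w z x y.
Proof.
move=> H1 H2 H4 x y z w.
  have := H1 x y z w; have := H2 x y z w; have := H4 x y z w.
  have := H1 x y w z; have := H2 x y w z; have := H4 x y w z.
  have := H1 x z y w; have := H2 x z y w; have := H4 x z y w.
  have := H1 x z w y; have := H2 x z w y; have := H4 x z w y.
  have := H1 x w y z; have := H2 x w y z; have := H4 x w y z.
  have := H1 x w z y; have := H2 x w z y; have := H4 x w z y.
  have := H1 y x z w; have := H2 y x z w; have := H4 y x z w.
  have := H1 y x w z; have := H2 y x w z; have := H4 y x w z.
  have := H1 y z x w; have := H2 y z x w; have := H4 y z x w.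
  have := H1 y z w x; have := H2 y z w x; have := H4 y z w x.
  have := H1 y w x z; have := H2 y w x z; have := H4 y w x z.
  have := H1 y w z x; have := H2 y w z x; have := H4 y w z x.
  have := H1 z x y w; have := H2 z x y w; have := H4 z x y w.
  have := H1 z x w y; have := H2 z x w y; have := H4 z x w y.
  have := H1 z y x w; have := H2 z y x w; have := H4 z y x w.
  have := H1 z y w x; have := H2 z y w x; have := H4 z y w x.
  have := H1 z w x y; have := H2 z w x y; have := H4 z w x y.
  have := H1 z w y x; have := H2 z w y x; have := H4 z w y x.
  have := H1 w x y z; have := H2 w x y z; have := H4 w x y z.
  have := H1 w x z y; have := H2 w x z y; have := H4 w x z y.
  have := H1 w y x z; have := H2 w y x z; have := H4 w y x z.
  have := H1 w y z x; have := H2 w y z x; have := H4 w y z x.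
  have := H1 w z x y; have := H2 w z x y; have := H4 w z x y.
  have := H1 w z y x; have := H2 w z y x; have := H4 w z y x.
  move=> *; lra.
Qed.

End Aux.

Lemma ricsum_sym (R : realType) (n : nat) (G : 'M[R]_n) (T : tensor4 R n) :
  G^T = G -> in_r T -> in_r (conjT T) ->
  forall x y, Ric G T x y + RicS G T x y = Ric G T y x + RicS G T y x.
Proof.
move=> GT [_ [H1 H2]] [_ [_ H4']] x y.
have H4 : forall x y z w, T x y w z + T y z w x + T z x w y = 0.
  move=> a b c d; have := H4' a b c d; rewrite /conjT => h; lra.
have K := @core_id2 _ _ T H1 H2 H4.
have Gs : forall i j, invmx G i j = invmx G j i.
  move=> i j; rewrite -[in RHS]GT -trmx_inv mxE //.
rewrite /RicS /Ric -!big_split /=.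
under eq_bigr => i _ do rewrite -big_split /=.
under [in RHS]eq_bigr => i _ do rewrite -big_split /=.
rewrite [in RHS]exchange_big /=.
apply: eq_bigr => i _; apply: eq_bigr => j _.
rewrite /conjT [invmx G j i]Gs -!mulrDr; congr (_ * _).
have := K (ebasis R i) x y (ebasis R j). lra.
Qed.

Lemma pi8_zero (R : realType) (n : nat) (G : 'M[R]_n) (T : tensor4 R n) :
  G^T = G -> in_r T -> in_r (conjT T) ->
  forall x y z w, pi8 G T x y z w = 0.
Proof.
move=> GT hT hC x y z w.
have L : forall u v, Lam (fun u v => Ric G T u v + RicS G T u v) u v = 0.
  move=> u v; rewrite /Lam (@ricsum_sym _ _ G T GT hT hC u v) subrr mul0r //.
move: hT hC => [m [H1 H2]] [_ [_ H4']].
have H4 : forall x y z w, T x y w z + T y z w x + T z x w y = 0.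
  move=> a b c d; have := H4' a b c d; rewrite /conjT => h; lra.
rewrite /pi8 /dotb /wedge !L.
have := @core_id _ _ T H1 H2 H4 x y z w.
move=> h; rewrite !(mul0r, mulr0, subrr, addr0, oppr0, subr0) //.
Qed.

Lemma conjTK (R : realType) (n : nat) (T : tensor4 R n) : conjT (conjT T) = T.
Proof.
apply: functional_extensionality => x; apply: functional_extensionality => y.
apply: functional_extensionality => z; apply: functional_extensionality => w.
by rewrite /conjT opprK.
Qed.

Theorem lemma4p9 (R : realType) (n : nat) (G : 'M[R]_n) (T : tensor4 R n) :
  (2 < n)%N -> G^T = G -> G \in unitmx ->
  in_r T -> in_r (conjT T) ->
  ((forall x y z w, pi8 G T x y z w = 0) /\
   (forall x y z w, pi8 G (conjT T) x y z w = 0)) /\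
  (symmetric_bilin (Ric G T) <-> symmetric_bilin (RicS G T)).
Proof.
move=> _ GT _ hT hC; split; first split.
- exact: pi8_zero.
- apply: pi8_zero => //; by rewrite conjTK.
- have S := @ricsum_sym _ _ G T GT hT hC.
  split=> h x y; have := S x y; rewrite h => e; lra.
Qed.
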